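(* The function $\sqrt{1-\mathcal{F}_{GM}(\rho,\sigma)}$, where $\mathcal{F}_{GM}(\rho,\sigma)=\operatorname{tr}(\rho\sigma)/\sqrt{\operatorname{tr}(\rho^2)\operatorname{tr}(\sigma^2)}$, is a metric on the set of density matrices on a fixed finite-dimensional complex Hilbert space.
   Context: A density matrix is a positive semidefinite operator of unit trace. A metric is a function that is nonnegative, vanishes exactly on equal arguments, is symmetric, and satisfies the triangle inequality. *)

(* Defs.v *)
From HB Require Import structures.
From mathcomp Require Import all_boot all_order all_algebra.
From mathcomp Require Import complex.
From mathcomp Require Import reals.
From mathcomp Require Import spectral.
Set Implicit Arguments. Unset Strict Implicit. Unset Printing Implicit Defensive.
Import Order.TTheory GRing.Theory Num.Theory.
Local Open Scope ring_scope.
Local Open Scope complex_scope.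

Definition adjmx (R : realType) (n : nat) (A : 'M[R[i]]_n) : 'M[R[i]]_n :=
  (map_mx Num.conj A)^T.

Definition psd (R : realType) (n : nat) (A : 'M[R[i]]_n) : Prop :=
  adjmx A = A /\
  forall v : 'rV[R[i]]_n, 0 <= (v *m A *m (map_mx Num.conj v)^T) 0 0.

Definition density (R : realType) (n : nat) (A : 'M[R[i]]_n) : Prop :=
  psd A /\ \tr A = 1.

Definition F_GM (R : realType) (n : nat) (rho sigma : 'M[R[i]]_n) : R[i] :=
  \tr (rho *m sigma) / sqrtC (\tr (rho *m rho) * \tr (sigma *m sigma)).

Definition dGM (R : realType) (n : nat) (rho sigma : 'M[R[i]]_n) : R[i] :=
  sqrtC (1 - F_GM rho sigma).

Definition is_metric_on (T : Type) (K : numDomainType) (S : T -> Prop) (d : T -> T -> K) : Prop :=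
  (forall x y, S x -> S y -> 0 <= d x y) /\
  (forall x y, S x -> S y -> (d x y = 0 <-> x = y)) /\
  (forall x y, S x -> S y -> d x y = d y x) /\
  (forall x y z, S x -> S y -> S z -> d x z <= d x y + d y z).

(* Main.v *)
Require Import Defs.
From mathcomp Require Import all_boot all_order all_algebra.
From mathcomp Require Import complex reals.
From mathcomp Require Import spectral.
From mathcomp Require Import ring lra.
Set Implicit Arguments. Unset Strict Implicit. Unset Printing Implicit Defensive.
Import Order.TTheory GRing.Theory Num.Theory.
Local Open Scope ring_scope.

Definition ipM (C : numClosedFieldType) (n : nat) (A B : 'M[C]_n) : C :=
  \sum_i \sum_j A i j * (B i j)^*.

Lemma ipMC (C : numClosedFieldType) n (A B : 'M[C]_n) : ipM B A = (ipM A B)^*.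
Proof.
rewrite /ipM rmorph_sum; apply: eq_bigr => i _.
rewrite rmorph_sum; apply: eq_bigr => j _.
by rewrite rmorphM /= conjCK mulrC.
Qed.

Lemma ipMDl (C : numClosedFieldType) n (A B D : 'M[C]_n) :
  ipM (A + B) D = ipM A D + ipM B D.
Proof.
rewrite /ipM -big_split; apply: eq_bigr => i _.
rewrite -big_split; apply: eq_bigr => j _.
by rewrite mxE mulrDl.
Qed.

Lemma ipMNl (C : numClosedFieldType) n (A D : 'M[C]_n) :
  ipM (- A) D = - ipM A D.
Proof.
rewrite /ipM -sumrN; apply: eq_bigr => i _.
rewrite -sumrN; apply: eq_bigr => j _.
by rewrite mxE mulNr.
Qed.

Lemma ipMZl (C : numClosedFieldType) n c (A D : 'M[C]_n) :
  ipM (c *: A) D = c * ipM A D.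
Proof.
rewrite /ipM mulr_sumr; apply: eq_bigr => i _.
rewrite mulr_sumr; apply: eq_bigr => j _.
by rewrite mxE mulrA.
Qed.

Lemma ipMDr (C : numClosedFieldType) n (A B D : 'M[C]_n) :
  ipM D (A + B) = ipM D A + ipM D B.
Proof. by rewrite ipMC ipMDl rmorphD /= -!ipMC. Qed.

Lemma ipMNr (C : numClosedFieldType) n (A D : 'M[C]_n) :
  ipM D (- A) = - ipM D A.
Proof. by rewrite ipMC ipMNl rmorphN /= -!ipMC. Qed.

Lemma ipMZr (C : numClosedFieldType) n c (A D : 'M[C]_n) :
  ipM D (c *: A) = c^* * ipM D A.
Proof. by rewrite ipMC ipMZl rmorphM /= -!ipMC. Qed.

Lemma ipM_ge0 (C : numClosedFieldType) n (A : 'M[C]_n) : 0 <= ipM A A.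
Proof.
by apply: sumr_ge0 => i _; apply: sumr_ge0 => j _; apply: mul_conjC_ge0.
Qed.

Lemma ipM_eq0 (C : numClosedFieldType) n (A : 'M[C]_n) : ipM A A = 0 -> A = 0.
Proof.
move=> h; apply/matrixP => i j; rewrite mxE.
have h1 : forall i, \sum_j A i j * (A i j)^* = 0.
  move=> i'; apply: (psumr_eq0P _ h) => // k _.
  by apply: sumr_ge0 => j' _; apply: mul_conjC_ge0.
have h2 : forall j, A i j * (A i j)^* = 0.
  by move=> j'; apply: (psumr_eq0P _ (h1 i)) => // k _; apply: mul_conjC_ge0.
by apply/eqP; rewrite -mul_conjC_eq0; apply/eqP; apply: h2.
Qed.

Lemma ipM00 (C : numClosedFieldType) n : ipM (0 : 'M[C]_n) 0 = 0.
Proof. by rewrite /ipM big1 // => i _; rewrite big1 // => j _; rewrite mxE mul0r. Qed.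

Lemma ring_id1 (C : numClosedFieldType) (sp sq a b : C) :
  sq * (sq * sp ^+ 2 - sp * a) + (sq * - (sp * b) - sp * - (sp * sq ^+ 2)) =
  sp * sq * (2 * sp * sq - (a + b)).
Proof. ring. Qed.

Lemma minkowski (C : numClosedFieldType) n (P Q : 'M[C]_n) :
  sqrtC (ipM (P + Q) (P + Q)) <= sqrtC (ipM P P) + sqrtC (ipM Q Q).
Proof.
have [hP|hP] := eqVneq (ipM P P) 0.
  by rewrite (ipM_eq0 hP) add0r ipM00 sqrtC0 add0r.
have [hQ|hQ] := eqVneq (ipM Q Q) 0.
  by rewrite (ipM_eq0 hQ) addr0 ipM00 sqrtC0 addr0.
set sp := sqrtC (ipM P P); set sq := sqrtC (ipM Q Q).
have sp0 : 0 < sp by rewrite sqrtC_gt0 lt_def hP ipM_ge0.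
have sq0 : 0 < sq by rewrite sqrtC_gt0 lt_def hQ ipM_ge0.
have NP : ipM P P = sp ^+ 2 by rewrite sqrtCK.
have NQ : ipM Q Q = sq ^+ 2 by rewrite sqrtCK.
set X := ipM P Q + ipM Q P.
have H0 := ipM_ge0 (sq *: P - sp *: Q).
rewrite !(ipMDl, ipMDr, ipMNl, ipMNr, ipMZl, ipMZr) in H0.
rewrite (geC0_conj (ltW sp0)) (geC0_conj (ltW sq0)) NP NQ in H0.
have H1 : 0 <= (sp * sq) * (2 * sp * sq - X).
  move: H0; rewrite /X; congr (_ <= _). clear. exact: ring_id1.
rewrite pmulr_rge0 ?mulr_gt0 // in H1.
have H2 : ipM (P + Q) (P + Q) <= (sp + sq) ^+ 2.
  rewrite -subr_ge0; move: H1; congr (_ <= _).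
  by rewrite !(ipMDl, ipMDr) NP NQ /X; ring.
rewrite -(@ler_pXn2r _ 2) // ?nnegrE ?sqrtC_ge0 ?ipM_ge0 ?sqrtCK //.
by rewrite addr_ge0 // ltW.
Qed.

Lemma tr_ipM (R : realType) n (A B : 'M[complex R]_n) :
  adjmx B = B -> \tr (A *m B) = ipM A B.
Proof.
move=> hB; rewrite /mxtrace /ipM; apply: eq_bigr => i _; rewrite mxE.
apply: eq_bigr => j _; congr (_ * _).
by rewrite -{1}hB /adjmx !mxE.
Qed.

Lemma Npos (R : realType) n (x : 'M[complex R]_n) : density x -> 0 < ipM x x.
Proof.
move=> [_ hx]; rewrite lt_def ipM_ge0 andbT; apply/eqP => /ipM_eq0 h.
by move: hx; rewrite h mxtrace0 => /eqP; rewrite eq_sym oner_eq0.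
Qed.

Definition nrm (R : realType) n (x : 'M[complex R]_n) := (sqrtC (ipM x x))^-1 *: x.

Lemma F_rep (R : realType) n (x y : 'M[complex R]_n) : density x -> density y ->
  1 - F_GM x y = ipM (nrm x - nrm y) (nrm x - nrm y) / 2.
Proof.
move=> hx hy.
have hxa : adjmx x = x by case: hx => [[]].
have hya : adjmx y = y by case: hy => [[]].
have hyx : ipM y x = ipM x y by rewrite -tr_ipM // mxtrace_mulC tr_ipM.
have ax := Npos hx; have ay := Npos hy.
rewrite /F_GM !tr_ipM // sqrtCM ?nnegrE ?ltW //.
rewrite /nrm.
set a := sqrtC (ipM x x); set b := sqrtC (ipM y y).
have a0 : 0 < a by rewrite sqrtC_gt0.
have b0 : 0 < b by rewrite sqrtC_gt0.
have NX : ipM x x = a ^+ 2 by rewrite sqrtCK.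
have NY : ipM y y = b ^+ 2 by rewrite sqrtCK.
rewrite !(ipMDl, ipMDr, ipMNl, ipMNr, ipMZl, ipMZr).
have ai : (a^-1)^* = a^-1 by rewrite geC0_conj // invr_ge0 ltW.
have bi : (b^-1)^* = b^-1 by rewrite geC0_conj // invr_ge0 ltW.
rewrite ai bi.
rewrite NX NY hyx.
have an : a != 0 by rewrite gt_eqF.
have bn : b != 0 by rewrite gt_eqF.
move: (ipM x y) => t; clearbody a b.
field.
by rewrite an bn.
Qed.

Theorem theorem11 (R : realType) (n : nat) :
  is_metric_on (@density R n) (@dGM R n).
Proof.
have h2 : (0 : complex R) <= 2^-1 by rewrite invr_ge0 ler0n.
split; [|split; [|split]].
- move=> x y hx hy; rewrite /dGM F_rep // sqrtC_ge0 mulr_ge0 ?ipM_ge0 //.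
- move=> x y hx hy; split; last first.
    by move=> ->; rewrite /dGM F_rep // subrr ipM00 mul0r sqrtC0.
  move=> /eqP; rewrite /dGM F_rep // sqrtC_eq0 mulf_eq0 invr_eq0 pnatr_eq0 orbF.
  move=> /eqP /ipM_eq0 /eqP; rewrite subr_eq0 /nrm => /eqP huv.
  have := congr1 mxtrace huv; rewrite !mxtraceZ.
  have [_ ->] := hx; have [_ ->] := hy; rewrite !mulr1 => /invr_inj hab.
  have an : sqrtC (ipM x x) != 0 by rewrite sqrtC_eq0 gt_eqF // Npos.
  rewrite hab in huv an.
  by rewrite -[x]scale1r -(mulfV an) -scalerA huv scalerA mulfV // scale1r.
- by move=> x y _ _; rewrite /dGM /F_GM mxtrace_mulC (mulrC (\tr (x *m x))).
- move=> x y z hx hy hz; rewrite /dGM !F_rep //.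
  have -> : nrm x - nrm z = (nrm x - nrm y) + (nrm y - nrm z) by rewrite addrA subrK.
  rewrite !sqrtCM ?nnegrE ?ipM_ge0 // -mulrDl.
  by rewrite ler_wpM2r ?sqrtC_ge0 // minkowski.
Qed.
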